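(* Let $R\subseteq S_n$ be a top-$k$ partial ranking, $\sigma\in R$ and $\tau\in S_n$. Then $$d(A_R(\sigma),\tau)=d(\sigma,\tau)+\binom{n-k}2-2\,d(\sigma,\Pi_R(\tau)).$$
   Context: $S_n$ is the symmetric group on $[n]$; $\sigma\in S_n$ is identified with the full ranking $\sigma(1)\succ\cdots\succ\sigma(n)$. For distinct items $x,y$, $\{x,y\}$ is discordant for $\sigma,\tau$ if $(\sigma^{-1}(x)-\sigma^{-1}(y))(\tau^{-1}(x)-\tau^{-1}(y))<0$. The Kendall distance $d(\sigma,\tau)$ is the number of unordered discordant pairs. For $0\le k\le n$ and distinct $a_1,\dots,a_k\in[n]$, the top-$k$ partial ranking is the set $R=\{\sigma\in S_n:\sigma(i)=a_i,\ i\le k\}$. The antithetic operator $A_R:R\to R$ is $A_R(\sigma)(i)=a_i$ for $i\le k$ and $A_R(\sigma)(k+j)=\sigma(n+1-j)$ for $j=1,\dots,n-k$. For $\tau\in S_n$, $\Pi_R(\tau)$ denotes the unique element of $R$ minimising $\rho\mapsto d(\rho,\tau)$ over $\rho\in R$. *)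

(* Defs.v *)
(* Items [n] and positions 1..n are 0-indexed: 'I_n. *)
From HB Require Import structures.
From mathcomp Require Import all_boot all_order all_algebra all_fingroup.
Set Implicit Arguments. Unset Strict Implicit. Unset Printing Implicit Defensive.
Import Order.TTheory GRing.Theory Num.Theory.

Definition pos n (s : {perm 'I_n}) (x : 'I_n) : int := (nat_of_ord ((s^-1)%g x))%:Z.

Definition discordant n (s t : {perm 'I_n}) (x y : 'I_n) : bool :=
  ((pos s x - pos s y) * (pos t x - pos t y) < 0)%R.

Definition kendall n (s t : {perm 'I_n}) : nat :=
  #|[set p : 'I_n * 'I_n | (p.1 < p.2)%N && discordant s t p.1 p.2]|.

(* Top-k partial ranking given by distinct a_0..a_{k-1} (a : 'I_k -> 'I_n injective):
   s(i) = a_i for every position i < k. *)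
Definition in_topk n k (a : 'I_k -> 'I_n) (s : {perm 'I_n}) : Prop :=
  forall (i : 'I_n) (j : 'I_k), nat_of_ord i = nat_of_ord j -> s i = a j.

(* The antithetic operator, 0-indexed: A(s)(i) = a_i for i < k, and
   A(s)(i) = s(n-1+k-i) for k <= i < n. *)
Definition anti_fun n k (a : 'I_k -> 'I_n) (s : {perm 'I_n}) (i : 'I_n) : 'I_n :=
  if insub (nat_of_ord i) : option 'I_k is Some j then a j
  else s (insubd i (n.-1 + k - i)%N).

(* as a permutation; the formula is injective whenever s lies in R,
   which is the only case used (A_R : R -> R). *)
Definition anti n k (a : 'I_k -> 'I_n) (s : {perm 'I_n}) : {perm 'I_n} :=
  match boolP (injectiveb (anti_fun a s)) with
  | AltTrue h => perm (injectiveP _ h)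
  | AltFalse _ => s
  end.

(* rho is the (unique) minimiser of rho |-> d(rho,t) over R, i.e. rho = Pi_R(t) *)
Definition is_proj n k (a : 'I_k -> 'I_n) (t rho : {perm 'I_n}) : Prop :=
  in_topk a rho /\ forall r : {perm 'I_n}, in_topk a r -> (kendall rho t <= kendall r t)%N.

(* Main.v *)
Require Import Defs.
From mathcomp Require Import all_boot all_order all_algebra all_fingroup.
From mathcomp Require Import zify.
Import Order.TTheory GRing.Theory Num.Theory.
Set Implicit Arguments. Unset Strict Implicit. Unset Printing Implicit Defensive.

Section S.
Variables (n : nat).
Implicit Types (u v : {perm 'I_n}) (x y : 'I_n).

Definition lt_in u x y := ((u^-1)%g x < (u^-1)%g y)%N.

Lemma discE u v x y : x != y -> discordant u v x y = (lt_in u x y != lt_in v x y).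
Proof.
move=> xy; rewrite /discordant /pos /lt_in mulr_lt0 !subr_lt0 !subr_eq0 !ltz_nat !eqz_nat.
have h : forall w : {perm 'I_n}, (val ((w^-1)%g x) == val ((w^-1)%g y)) = false.
  by move=> w; apply/eqP => /val_inj /perm_inj /eqP; rewrite (negPf xy).
by rewrite !h /=; case: (_ < _)%N; case: (_ < _)%N.
Qed.

Lemma lt_inN u x y : x != y -> lt_in u y x = ~~ lt_in u x y.
Proof.
move=> xy; rewrite /lt_in ltnNge leq_eqVlt.
have -> : (val ((u^-1)%g x) == val ((u^-1)%g y)) = false.
  by apply/eqP => /val_inj /perm_inj e; rewrite e eqxx in xy.
by [].
Qed.

Lemma discC u v x y : discordant u v x y = discordant u v y x.
Proof. by rewrite /discordant -mulrNN !opprB. Qed.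

Lemma invP u x o : u o = x -> (u^-1)%g x = o.
Proof. by move=> <-; rewrite permK. Qed.

Variables (k : nat) (a : 'I_k -> 'I_n).
Hypotheses (kn : (k <= n)%N) (ainj : injective a).

Definition tail x := x \notin codom a.

Lemma topk_pos u (i : 'I_k) : in_topk a u -> val ((u^-1)%g (a i)) = val i.
Proof.
move=> hu; have lt : (i < n)%N := leq_trans (ltn_ord i) kn.
by rewrite (invP (hu (Ordinal lt) i erefl)).
Qed.

Lemma topk_tail u x : in_topk a u -> (k <= (u^-1)%g x)%N = tail x.
Proof.
move=> hu; rewrite /tail; apply/idP/idP.
- move=> hk; apply/negP => /codomP [j e]; rewrite e topk_pos // in hk.
  by rewrite leqNgt ltn_ord in hk.
- move=> ht; rewrite leqNgt; apply/negP => hlt.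
  move/negP: ht; apply; apply/codomP; exists (Ordinal hlt).
  by rewrite -(hu ((u^-1)%g x) (Ordinal hlt) erefl) permKV.
Qed.

Lemma ltin_R u v x y : in_topk a u -> in_topk a v -> ~~ (tail x && tail y) ->
  lt_in u x y = lt_in v x y.
Proof.
move=> hu hv; rewrite /lt_in.
have [hx|hx] := boolP (x \in codom a).
  case/codomP: hx => i ->.
  have [hy|hy] := boolP (y \in codom a).
    by case/codomP: hy => j -> _; rewrite !topk_pos.
  move=> _; have := topk_tail y hu; have := topk_tail y hv.
  rewrite /tail hy !topk_pos // => h1 h2.
  by rewrite (leq_trans (ltn_ord i) h1) (leq_trans (ltn_ord i) h2).
rewrite /tail hx /= => /negPn /codomP [j ->].
have := topk_tail x hu; have := topk_tail x hv.
rewrite /tail hx !topk_pos // => h1 h2.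
by rewrite !ltnNge (leq_trans (ltnW (ltn_ord j)) h1) (leq_trans (ltnW (ltn_ord j)) h2).
Qed.

Lemma anti_fun_lt s (i : 'I_n) (j : 'I_k) : val i = val j -> anti_fun a s i = a j.
Proof.
move=> e; rewrite /anti_fun; case: insubP => [j' _ e' | ].
  by congr a; apply: val_inj; rewrite /= e' e.
by rewrite e ltn_ord.
Qed.

Lemma anti_fun_ge s (i : 'I_n) : (k <= i)%N -> anti_fun a s i = s (insubd i (n.-1 + k - i)).
Proof.
move=> hi; rewrite /anti_fun; case: insubP => [j' hj _ | //].
by rewrite ltnNge hi in hj.
Qed.

Lemma vinsub (i : 'I_n) : (k <= i)%N -> val (insubd i (n.-1 + k - i) : 'I_n) = (n.-1 + k - i)%N.
Proof. move=> hi; rewrite val_insubd ifT //; have := ltn_ord i; lia. Qed.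

Lemma anti_inj s : in_topk a s -> injective (anti_fun a s).
Proof.
move=> hs i j.
have wide : forall (i0 : 'I_k), (i0 < n)%N := fun i0 => leq_trans (ltn_ord i0) kn.
case: (ltnP i k) => hi; case: (ltnP j k) => hj.
- rewrite (@anti_fun_lt s i (Ordinal hi)) // (@anti_fun_lt s j (Ordinal hj)) //.
  by move/ainj/(congr1 val) => /= e; apply: val_inj.
- rewrite (@anti_fun_lt s i (Ordinal hi)) // anti_fun_ge // .
  rewrite -(hs (Ordinal (wide (Ordinal hi))) (Ordinal hi) erefl) => /perm_inj/(congr1 val).
  rewrite vinsub //= => e; have := ltn_ord j; lia.
- rewrite (@anti_fun_lt s j (Ordinal hj)) // anti_fun_ge // .
  rewrite -(hs (Ordinal (wide (Ordinal hj))) (Ordinal hj) erefl) => /perm_inj/(congr1 val).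
  rewrite vinsub //= => e; have := ltn_ord i; lia.
- rewrite !anti_fun_ge // => /perm_inj/(congr1 val); rewrite !vinsub // => e.
  apply: val_inj => /=; have := ltn_ord i; have := ltn_ord j; lia.
Qed.

Lemma anti_E s : in_topk a s -> forall i, anti a s i = anti_fun a s i.
Proof.
move=> hs i; unfold anti; destruct boolP as [h|h]; first by rewrite permE.
by case/negP: h; apply/injectiveP; exact: anti_inj.
Qed.

Lemma anti_topk s : in_topk a s -> in_topk a (anti a s).
Proof. by move=> hs i j e; rewrite anti_E // (anti_fun_lt _ e). Qed.

Lemma anti_inv s x : in_topk a s -> tail x ->
  val (((anti a s)^-1)%g x) = (n.-1 + k - (s^-1)%g x)%N.
Proof.
move=> hs hx; have hp := topk_tail x hs; rewrite hx in hp.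
have hq : (n.-1 + k - (s^-1)%g x < n)%N by have := ltn_ord ((s^-1)%g x); lia.
rewrite (invP (o := Ordinal hq)) //.
rewrite anti_E // anti_fun_ge /=; last by have := ltn_ord ((s^-1)%g x); lia.
have -> : insubd (Ordinal hq) (n.-1 + k - (n.-1 + k - (s^-1)%g x)) = (s^-1)%g x.
  apply: val_inj; rewrite vinsub /=; have := ltn_ord ((s^-1)%g x); lia.
by rewrite permKV.
Qed.

Lemma anti_lt s x y : in_topk a s -> tail x -> tail y -> x != y ->
  lt_in (anti a s) x y = ~~ lt_in s x y.
Proof.
move=> hs hx hy xy; rewrite -lt_inN // /lt_in !anti_inv //.
have := topk_tail x hs; have := topk_tail y hs; rewrite hx hy.
have := ltn_ord ((s^-1)%g x); have := ltn_ord ((s^-1)%g y).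
move=> h1 h2 h3 h4; apply/idP/idP; lia.
Qed.

Lemma exists_sorted (t : {perm 'I_n}) : exists r, in_topk a r /\
  forall x y, tail x -> tail y -> lt_in r x y = lt_in t x y.
Proof.
pose E := [seq j <- enum 'I_n | tail (t j)].
pose L1 := [seq a j | j <- enum 'I_k].
pose L2 := map t E.
pose L := L1 ++ L2.
have nL1 : forall z, tail z -> (z \in L1) = false.
  move=> z hz; apply/negP => /mapP [i _ e].
  by rewrite /tail e codom_f in hz.
have uL : uniq L.
  rewrite cat_uniq; apply/and3P; split.
  - by rewrite map_inj_uniq // enum_uniq.
  - apply/hasPn => x /mapP [j hj ->].
  rewrite mem_filter in hj; case/andP: hj => ht _.
  by rewrite /= nL1.
  - rewrite map_inj_uniq; last exact: perm_inj.
    by apply: filter_uniq; rewrite enum_uniq.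
have inL : forall x, x \in L.
  move=> x; rewrite mem_cat; case hx: (x \in codom a).
    by [].
  rewrite /=; apply/mapP; exists ((t^-1)%g x); last by rewrite permKV.
  by rewrite mem_filter mem_enum andbT /tail permKV hx.
have sL : size L = n.
  rewrite -[RHS](size_enum_ord n); apply/perm_size/uniq_perm => //; first by rewrite enum_uniq.
  by move=> x; rewrite inL mem_enum.
pose f := fun i : 'I_n => nth i L i.
have finj : injective f.
  move=> i j; rewrite /f (set_nth_default j i) ?sL // => /eqP.
  by rewrite nth_uniq ?sL // => /eqP /val_inj.
pose r := perm finj.
have rinv : forall x, val ((r^-1)%g x) = index x L.
  move=> x; have hlt : (index x L < n)%N by rewrite -[X in (_ < X)%N]sL index_mem inL.
  by rewrite (invP (o := Ordinal hlt)) // permE /f /= nth_index // inL.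
exists r; split.
  move=> i j e; rewrite permE /f nth_cat size_map size_enum_ord e ltn_ord.
  rewrite /L1 (nth_map j) ?size_enum_ord //.
  by congr a; apply: val_inj; rewrite /= nth_enum_ord.
move=> x y hx hy; rewrite /lt_in !rinv !index_cat !nL1 // ltn_add2l.
rewrite -{1}(permKV t x) -{1}(permKV t y) !(index_map (@perm_inj _ t)).
have sE : sorted (fun i j : 'I_n => (i < j)%N) E.
  apply: sorted_filter; first by move=> ???; exact: ltn_trans.
  by have := iota_ltn_sorted 0 n; rewrite -val_enum_ord sorted_map.
have trE : transitive (fun i j : 'I_n => (i < j)%N) by move=> ???; exact: ltn_trans.
have xE : (t^-1)%g x \in E by rewrite mem_filter mem_enum andbT /tail permKV.
have yE : (t^-1)%g y \in E by rewrite mem_filter mem_enum andbT /tail permKV.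
apply/idP/idP => h.
  exact: (sorted_ltn_index trE sE _ _ xE yE h).
rewrite ltnNge leq_eqVlt; apply/negP => /orP [/eqP e | h'].
  have : nth x E (index ((t^-1)%g y) E) = nth x E (index ((t^-1)%g x) E) by rewrite e.
  by rewrite !nth_index // => e'; rewrite e' ltnn in h.
have := sorted_ltn_index trE sE _ _ yE xE h'; rewrite /=; lia.
Qed.

Definition TT := [set p : 'I_n * 'I_n | (p.1 < p.2)%N && (tail p.1 && tail p.2)].

Lemma card_tail : #|[set x | tail x]| = (n - k)%N.
Proof.
have -> : #|[set x | tail x]| = #|[predC codom a]| by apply: eq_card => x; rewrite !inE.
have := cardC (mem (codom a)); rewrite (card_codom ainj) !card_ord => h; apply: (@addnI k); rewrite subnKC //; exact: h.
Qed.

Lemma card_TT : #|TT| = 'C(n - k, 2).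
Proof.
rewrite -card_tail -cards_draws.
pose f := fun p : 'I_n * 'I_n => [set p.1; p.2].
have finj : {in TT &, injective f}.
  move=> [p1 p2] [q1 q2]; rewrite !inE /f /= => /andP [hp _] /andP [hq _] E.
  have h1 : p1 \in [set q1; q2] by rewrite -E set21.
  have h2 : p2 \in [set q1; q2] by rewrite -E set22.
  have h3 : q1 \in [set p1; p2] by rewrite E set21.
  have h4 : q2 \in [set p1; p2] by rewrite E set22.
  move: h1 h2; rewrite !in_set2.
  case/orP => /eqP e1; case/orP => /eqP e2; move: hp; rewrite e1 e2 ?ltnn //.
  by move=> hp; have := ltn_trans hp hq; rewrite ltnn.
rewrite -(card_in_imset finj); apply: eq_card => A.
apply/idP/idP.
  case/imsetP => [[x y]]; rewrite !inE /f /= => /and3P [hxy hx hy] ->.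
  rewrite cards2 -val_eqE /= neq_ltn hxy andbT.
  by apply/subsetP => z; rewrite !inE => /orP [/eqP -> | /eqP ->].
rewrite inE => /andP [hAB /cards2P [x [y [hxy eA]]]].
have hx : tail x by have := subsetP hAB x; rewrite eA set21 inE => /(_ isT).
have hy : tail y by have := subsetP hAB y; rewrite eA set22 inE => /(_ isT).
move: hxy; rewrite -val_eqE neq_ltn => /orP [h | h].
  by apply/imsetP; exists (x, y); [rewrite inE /= h hx hy | rewrite eA].
apply/imsetP; exists (y, x); first by rewrite inE /= h hx hy.
by rewrite eA /f /= setUC.
Qed.

Definition D u v := [set p : 'I_n * 'I_n | (p.1 < p.2)%N && discordant u v p.1 p.2].
Lemma kendallD u v : kendall u v = #|D u v|. Proof. by []. Qed.

Lemma ltne x y : (x < y)%N -> x != y.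
Proof. by move=> h; apply/eqP => e; rewrite e ltnn in h. Qed.

Lemma D_off u w v : in_topk a u -> in_topk a w -> D u v :\: TT = D w v :\: TT.
Proof.
move=> hu hw; apply/setP => [[x y]]; rewrite !inE /=.
case xy: (x < y)%N; rewrite /= ?andbF //.
case ht: (tail x && tail y) => //=.
by rewrite !discE ?ltne // (ltin_R hu hw) ?ht.
Qed.

Lemma D_diag u : D u u = set0.
Proof.
apply/setP => [[x y]]; rewrite !inE /=.
case xy: (x < y)%N => //=; by rewrite discE ?ltne // eqxx.
Qed.

Lemma D_TT_anti s t : in_topk a s -> D (anti a s) t :&: TT = TT :\: D s t.
Proof.
move=> hs; apply/setP => [[x y]]; rewrite !inE /=.
case xy: (x < y)%N; rewrite /= ?andbF //.
case hx: (tail x); case hy: (tail y); rewrite /= ?andbF //.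
rewrite !discE ?ltne // anti_lt ?ltne //.
by case: (lt_in s x y); case: (lt_in t x y).
Qed.
End S.

Unset Implicit Arguments.
Theorem lemma6 (n k : nat) (a : 'I_k -> 'I_n) (s t rho : {perm 'I_n}) :
  (k <= n)%N -> injective a ->
  in_topk a s -> is_proj a t rho ->
  ((kendall (anti a s) t)%:Z =
     (kendall s t)%:Z + ('C(n - k, 2))%:Z - 2 * (kendall s rho)%:Z)%R.
Proof.
move=> kn ainj hs [hrho hmin].
have [r [hr hrs]] := exists_sorted kn ainj t.
have hk : forall u, in_topk a u -> kendall u t = (#|D u t :&: TT a| + #|D s t :\: TT a|)%N.
  by move=> u hu; rewrite -(@D_off _ _ _ kn u s t hu hs) cardsID.
have hr0 : D r t :&: TT a = set0.
  apply/setP => [[x y]]; rewrite !inE /=.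
  case xy: (x < y)%N; rewrite /= ?andbF //.
  case hx: (tail a x); case hy: (tail a y); rewrite /= ?andbF //.
  by rewrite discE ?ltne // hrs // eqxx.
have hT : D rho t :&: TT a = set0.
  have := hmin r hr; rewrite !hk // hr0 cards0 leq_add2r leqn0 => /eqP.
  exact: cards0_eq.
have e4 : D s rho :&: TT a = D s t :&: TT a.
  apply/setP => [[x y]]; rewrite !inE /=.
  case xy: (x < y)%N; rewrite /= ?andbF //.
  case hx: (tail a x); case hy: (tail a y); rewrite /= ?andbF ?andbT //.
  have : (x, y) \notin D rho t :&: TT a by rewrite hT inE.
  rewrite !inE /= xy hx hy !andbT discE ?ltne // negbK => /eqP E.
  by rewrite !discE ?ltne // E.
rewrite !kendallD -(cardsID (TT a) (D (anti a s) t)) -(cardsID (TT a) (D s t))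
  -(cardsID (TT a) (D s rho)).
rewrite (@D_off _ _ _ kn _ _ t (anti_topk kn ainj hs) hs) (D_TT_anti kn ainj t hs) e4 (@D_off _ _ _ kn _ _ rho hs hrho) D_diag set0D cards0.
rewrite -(card_TT kn ainj) cardsD setIC.
have : (#|D s t :&: TT a| <= #|TT a|)%N by apply: subset_leq_card; apply: subsetIr.
lia.
Qed.
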